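(* Let $V$ be a finite set and $d:V\times V\to\mathbb{R}_{\ge0}$ a semi-metric (symmetric, $d(i,i)=0$). Let $s\ge1$ be such that $d(i,j)\le s\,(d(i,k)+d(k,j))$ for all $i,j,k\in V$. Let $\pi:V\to\mathbb{R}_+$ with $\pi(V)=1$ and suppose $\sum_{i,j\in V}\pi(i)\pi(j)d(i,j)=2$. Let $L\subseteq V$ be nonempty with $\mathrm{diam}(L)=\max_{i,j\in L}d(i,j)$. Then $$\sum_{i\notin L}\pi(i)\,d(i,L)\ge\frac{1}{s^2}-\frac12\,\mathrm{diam}(L).$$
   Context: $d(i,L)=\min_{j\in L}d(i,j)$; $\pi(A)=\sum_{i\in A}\pi(i)$. *)

(* Defs.v *)
From mathcomp Require Import all_boot all_order all_algebra.
Set Implicit Arguments. Unset Strict Implicit. Unset Printing Implicit Defensive.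
Import Order.TTheory GRing.Theory Num.Theory.
Local Open Scope ring_scope.

(* d(i,L) = min_{j in L} d(i,j); for empty L it defaults to d i i (irrelevant,
   the theorem assumes L nonempty). *)
Definition dist_set (R : realDomainType) (V : finType) (d : V -> V -> R)
    (i : V) (L : {set V}) : R :=
  match [pick j in L] with
  | Some j0 => \big[Num.min/d i j0]_(j in L) d i j
  | None => d i i
  end.

(* diam(L) = max_{i,j in L} d(i,j) (distances are nonnegative, so 0 is a valid seed). *)
Definition diam (R : realDomainType) (V : finType) (d : V -> V -> R)
    (L : {set V}) : R :=
  \big[Num.max/0]_(i in L) \big[Num.max/0]_(j in L) d i j.

(* Main.v *)
Require Import Defs.
From mathcomp Require Import all_boot all_order all_algebra.
From mathcomp Require Import ring lra.
Import Order.TTheory GRing.Theory Num.Theory.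
Local Open Scope ring_scope.

Lemma dist_set_wit (R : realDomainType) (V : finType) (d : V -> V -> R)
  (i : V) (L : {set V}) : L != set0 ->
  exists2 j, j \in L & dist_set d i L = d i j.
Proof.
move=> /set0Pn [j0 Hj0]; rewrite /dist_set.
case: pickP => [j1 Hj1|/(_ j0)]; last by rewrite Hj0.
apply: (big_ind (fun x => exists2 j, j \in L & x = d i j)).
- by exists j1.
- move=> x y [a Ha ->] [b Hb ->]; case: (leP (d i a) (d i b)) => _.
  + by exists a.
  + by exists b.
- by move=> j Hj; exists j.
Qed.

Lemma diam_ge (R : realDomainType) (V : finType) (d : V -> V -> R)
  (L : {set V}) a b : a \in L -> b \in L -> d a b <= diam d L.
Proof.
move=> Ha Hb; rewrite /diam.
apply: le_trans (le_bigmax_cond _ _ Ha).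
exact: (le_bigmax_cond _ _ Hb).
Qed.

Theorem mainTheorem10 (R : realFieldType) (V : finType) (d : V -> V -> R)
  (s : R) (pi : V -> R) (L : {set V})
  (d_ge0 : forall i j, 0 <= d i j)
  (d_sym : forall i j, d i j = d j i)
  (d_ii : forall i, d i i = 0)
  (s_ge1 : 1 <= s)
  (d_tri : forall i j k, d i j <= s * (d i k + d k j))
  (pi_gt0 : forall i, 0 < pi i)
  (pi_sum : \sum_(i : V) pi i = 1)
  (avg_d : \sum_(i : V) \sum_(j : V) pi i * pi j * d i j = 2)
  (L_nonempty : L != set0) :
  \sum_(i in ~: L) pi i * dist_set d i L >= s^-2 - diam d L / 2.
Proof.
set D := diam d L.
pose y i := if i \in L then 0 else dist_set d i L.
have Hw : forall i, exists2 l, l \in L & d i l = y i.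
  move=> i; rewrite /y; case: ifP => Hi.
    by exists i; rewrite ?d_ii.
  by have [l Hl ->] := @dist_set_wit _ _ d i L L_nonempty; exists l.
have y_ge0 : forall i, 0 <= y i.
  by move=> i; have [l _ <-] := Hw i.
have HX : \sum_(i in ~: L) pi i * dist_set d i L = \sum_i pi i * y i.
  rewrite [RHS](bigID (fun i => i \in L)) /=.
  rewrite [X in _ = X + _]big1 ?add0r; last by move=> i Hi; rewrite /y Hi mulr0.
  by apply: eq_big => [i|i]; rewrite ?inE // /y => /negbTE ->.
rewrite HX; set X := \sum_i pi i * y i.
have s0 : 0 < s by apply: lt_le_trans s_ge1.
have ss : s <= s ^+ 2 by rewrite expr2 ler_peMl // ltW.
have Hd : forall i j, d i j <= s ^+ 2 * (y i + y j + D).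
  move=> i j; have [a Ha Hia] := Hw i; have [b Hb Hjb] := Hw j.
  have Hab := @diam_ge _ _ d L _ _ Ha Hb.
  have h1 := d_tri i j a.
  have h2 := d_tri a j b.
  rewrite (d_sym b j) Hjb in h2.
  rewrite Hia in h1.
  have h3 : d a j <= s * (D + y j) by apply: le_trans h2 _; rewrite ler_pM2l // lerD2r.
  apply: le_trans h1 _.
  have := y_ge0 i; have := y_ge0 j; have := d_ge0 a j.
  move=> *; nra.
have Hin : forall i, \sum_j pi i * pi j * (s ^+ 2 * (y i + y j + D)) =
    s ^+ 2 * pi i * (y i + X + D).
  move=> i.
  have e : forall j, pi i * pi j * (s ^+ 2 * (y i + y j + D)) =
    (s ^+ 2 * pi i * (y i + D)) * pi j + (s ^+ 2 * pi i) * (pi j * y j).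
    by move=> j; ring.
  under eq_bigr => j _ do rewrite e.
  rewrite big_split /= -!mulr_sumr pi_sum /X; ring.
have Hout : \sum_i \sum_j pi i * pi j * (s ^+ 2 * (y i + y j + D)) =
    s ^+ 2 * (2 * X + D).
  have e : forall i, \sum_j pi i * pi j * (s ^+ 2 * (y i + y j + D)) =
    (s ^+ 2 * (X + D)) * pi i + s ^+ 2 * (pi i * y i).
    by move=> i; rewrite Hin; ring.
  under eq_bigr => i _ do rewrite e.
  rewrite big_split /= -!mulr_sumr pi_sum /X; ring.
have Hle : \sum_i \sum_j pi i * pi j * d i j <=
    \sum_i \sum_j pi i * pi j * (s ^+ 2 * (y i + y j + D)).
  apply: ler_sum => i _; apply: ler_sum => j _.
  by rewrite ler_pM2l // mulr_gt0.
rewrite avg_d Hout in Hle.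
have s2 : 0 < s ^+ 2 by rewrite exprn_gt0.
have h : 2 / s ^+ 2 <= 2 * X + D by rewrite ler_pdivrMr // mulrC.
move: h; rewrite mulrC; lra.
Qed.
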